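(* Let $\mathbf{k}$ be any field, $p\ge 3$ an integer, and $S=\mathbf{k}[e_1,\ldots,e_{2p}]$. Let $f_0=t^2+e_pt+e_{2p}$ and $f_i=e_it+e_{p+i}$ for $1\le i\le p-1$, in $S[t]$. Then the elimination ideal $I=\langle f_0,\ldots,f_{p-1}\rangle\cap S$ equals the ideal $J$ of $S$ generated by the $3\times 3$ minors of the $3\times(2p-1)$ matrix $$\begin{pmatrix} 1 & e_1 & 0 & e_2 & 0 & \cdots & e_{p-1} & 0\\ e_p & e_{p+1} & e_1 & e_{p+2} & e_2 & \cdots & e_{2p-1} & e_{p-1}\\ e_{2p} & 0 & e_{p+1} & 0 & e_{p+2} & \cdots & 0 & e_{2p-1}\end{pmatrix}.$$
   Context: The ideal $\langle f_0,\dots,f_{p-1}\rangle$ is taken in $S[t]$ and intersected with $S\subset S[t]$. The matrix consists of the column $(1,e_p,e_{2p})^T$ followed, for each $i=1,\dots,p-1$, by the two columns $(e_i,e_{p+i},0)^T$ and $(0,e_i,e_{p+i})^T$. *)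

(* Defs.v *)
From HB Require Import structures.
From mathcomp Require Import all_boot all_order all_algebra.
From mathcomp Require Import mpoly.
Unset Printing Implicit Defensive.
Import GRing.Theory.
Local Open Scope ring_scope.

Definition in_ideal_gen (R : comPzRingType) (G : R -> Prop) (x : R) : Prop :=
  exists (n : nat) (g : 'I_n -> R) (c : 'I_n -> R),
    (forall i, G (g i)) /\ x = \sum_(i < n) c i * g i.

(* S = k[e_1, ..., e_{2p}] is {mpoly k[p.*2]}; e_j (1 <= j <= 2p) is 'X_(j-1). *)
Definition evar (k : fieldType) (p j : nat) : {mpoly k[p.*2]} :=
  match insub j.-1 with Some i => 'X_i | None => 0 end.

Definition f0 (k : fieldType) (p : nat) : {poly {mpoly k[p.*2]}} :=
  'X^2 + (evar k p p)%:P * 'X + (evar k p p.*2)%:P.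

Definition fi (k : fieldType) (p i : nat) : {poly {mpoly k[p.*2]}} :=
  (evar k p i)%:P * 'X + (evar k p (p + i))%:P.

Definition fgens (k : fieldType) (p : nat) (q : {poly {mpoly k[p.*2]}}) : Prop :=
  q = f0 k p \/ exists i, (1 <= i <= p.-1)%N /\ q = fi k p i.

Definition elim_ideal (k : fieldType) (p : nat) (x : {mpoly k[p.*2]}) : Prop :=
  @in_ideal_gen _ (fgens k p) x%:P.

(* The 3 x (2p-1) matrix: column 0 is (1, e_p, e_{2p}); for i = 1..p-1,
   column 2i-1 is (e_i, e_{p+i}, 0) and column 2i is (0, e_i, e_{p+i}). *)
Definition Mmat (k : fieldType) (p : nat) : 'M[{mpoly k[p.*2]}]_(3, p.*2.-1) :=
  \matrix_(r < 3, c < p.*2.-1)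
    let i := (c.+1 %/ 2)%N in
    if c == 0%N :> nat then
      match val r with 0%N => 1 | 1%N => evar k p p | _ => evar k p p.*2 end
    else if odd c then
      match val r with 0%N => evar k p i | 1%N => evar k p (p + i) | _ => 0 end
    else
      match val r with 0%N => 0 | 1%N => evar k p i | _ => evar k p (p + i) end.

Definition minor3 (k : fieldType) (p : nat) (x : {mpoly k[p.*2]}) : Prop :=
  exists f : 'I_3 -> 'I_(p.*2.-1),
    (f ord0 < f (inord 1) < f (inord 2))%N /\ x = \det (colsub f (Mmat k p)).

Definition minor_ideal (k : fieldType) (p : nat) (x : {mpoly k[p.*2]}) : Prop :=
  @in_ideal_gen _ (minor3 k p) x.

(* Main.v *)
Require Import Defs.
From HB Require Import structures.
From mathcomp Require Import all_boot all_order all_algebra.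
From mathcomp Require Import mpoly.
From mathcomp Require Import zify ring.
Local Open Scope ring_scope.
Import GRing.Theory.

Section Ideal.
Variable R : comPzRingType.
Variable G : R -> Prop.

Lemma ig0 : in_ideal_gen R G 0.
Proof. by exists 0%N, (fun _ => 0), (fun _ => 0); split => [[]|]; rewrite ?big_ord0. Qed.

Lemma igG g : G g -> in_ideal_gen R G g.
Proof. by move=> Gg; exists 1%N, (fun _ => g), (fun _ => 1); split => //; rewrite big_ord1 mul1r. Qed.

Lemma igD x y : in_ideal_gen R G x -> in_ideal_gen R G y -> in_ideal_gen R G (x + y).
Proof.
move=> [n1 [g1 [c1 [G1 ->]]]] [n2 [g2 [c2 [G2 ->]]]].
exists (n1 + n2)%N, (fun i => match split i with inl a => g1 a | inr b => g2 b end),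
  (fun i => match split i with inl a => c1 a | inr b => c2 b end); split.
  by move=> i; case: split.
rewrite big_split_ord /=; congr (_ + _); apply: eq_bigr => i _.
  by rewrite (unsplitK (inl _)).
by rewrite (unsplitK (inr _)).
Qed.

Lemma igM c x : in_ideal_gen R G x -> in_ideal_gen R G (c * x).
Proof.
move=> [n [g [c1 [G1 ->]]]]; exists n, g, (fun i => c * c1 i); split => //.
by rewrite mulr_sumr; apply: eq_bigr => i _; rewrite mulrA.
Qed.

Lemma igN x : in_ideal_gen R G x -> in_ideal_gen R G (- x).
Proof. by move=> h; rewrite -mulN1r; apply: igM. Qed.

Lemma igsum n (F : 'I_n -> R) : (forall i, in_ideal_gen R G (F i)) -> in_ideal_gen R G (\sum_(i < n) F i).
Proof. move=> h; apply: (big_ind (in_ideal_gen R G)) => //; [exact: ig0|exact: igD]. Qed.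

End Ideal.

Section PartB.
Variable k : fieldType.
Variable p : nat.
Local Notation S := {mpoly k[p.*2]}.

Definition colgen (c : 'I_(p.*2.-1)) : {poly S} :=
  if c == 0%N :> nat then f0 k p else fi k p (c.+1 %/ 2).
Definition colmult (c : 'I_(p.*2.-1)) : {poly S} :=
  if (c != 0%N :> nat) && odd c then 'X else 1.

Lemma colgen_ok c : fgens k p (colgen c).
Proof.
rewrite /colgen /fgens; case: eqP => [_|/eqP c0]; first by left.
right; exists (c.+1 %/ 2)%N; split => //.
have := ltn_ord c; move: c0; rewrite -!/(nat_of_ord _).
move: (nat_of_ord c) => n; lia.
Qed.

Lemma colvec c : \sum_(r < 3) 'X^(2 - r) * (Mmat k p r c)%:P = colmult c * colgen c.
Proof.
rewrite !big_ord_recr big_ord0 /= !mxE /colmult /colgen /f0 /fi.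
case: eqP => [_|/eqP c0] /=.
  by rewrite !subn0 !expr0 !expr1 ?polyC1; ring.
case: ifP => _; rewrite !expr0 !expr1 ?polyC0; ring.
Qed.

End PartB.

Section PartB2.
Variable k : fieldType.
Variable p : nat.
Local Notation S := {mpoly k[p.*2]}.

Lemma elimD x y : elim_ideal k p x -> elim_ideal k p y -> elim_ideal k p (x + y).
Proof. by rewrite /elim_ideal polyCD; apply: igD. Qed.
Lemma elimM c x : elim_ideal k p x -> elim_ideal k p (c * x).
Proof. by rewrite /elim_ideal polyCM; apply: igM. Qed.
Lemma elim0 : elim_ideal k p 0.
Proof. by rewrite /elim_ideal; apply: ig0. Qed.

Lemma minor_elim x : minor3 k p x -> elim_ideal k p x.
Proof.
move=> [f [_ ->]].
set A := colsub f (Mmat k p).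
pose N := map_mx polyC A.
pose w : 'rV[{poly S}]_3 := \row_(j < 3) 'X^(2 - j).
have wN : forall j, (w *m N) 0 j = colmult k p (f j) * colgen k p (f j).
  move=> j; rewrite -(colvec k p) mxE; apply: eq_bigr => r _.
  by rewrite !mxE.
have key : (\det A)%:P = \sum_(j < 3) ((\adj N) j 2%:R * colmult k p (f j)) * colgen k p (f j).
  have : (w *m N *m \adj N) 0 2%:R = (\det A)%:P.
    rewrite -mulmxA mul_mx_adj mul_mx_scalar mxE /= mxE /=.
    by rewrite expr0 mulr1 det_map_mx.
  rewrite mxE => <-; apply: eq_bigr => j _.
  by rewrite wN mulrC mulrA.
rewrite /elim_ideal key.
exists 3%N. exists (fun j => colgen k p (f j)).
exists (fun j => (\adj N) j 2%:R * colmult k p (f j)).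
by split; first by move=> j; apply: (colgen_ok k p).
Qed.

Lemma minor_to_elim x : minor_ideal k p x -> elim_ideal k p x.
Proof.
move=> [n [g [c [Gg ->]]]].
apply: (big_ind (elim_ideal k p)); [exact: elim0|exact: elimD|].
move=> i _; apply: elimM; exact: minor_elim.
Qed.
End PartB2.

Section Koszul.
Variable k : fieldType.
Variable m : nat.
Local Notation P := {mpoly k[m]}.

Definition evh (j0 : 'I_m) (j : 'I_m) : P := if j == j0 then 0 else 'X_j.
Definition ev (j0 : 'I_m) (x : P) : P := mmap (@mpolyC m k) (evh j0) x.

Lemma evM j0 x y : ev j0 (x * y) = ev j0 x * ev j0 y.
Proof. by rewrite /ev rmorphM. Qed.
Lemma evD j0 x y : ev j0 (x + y) = ev j0 x + ev j0 y.
Proof. by rewrite /ev rmorphD. Qed.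
Lemma ev0 j0 : ev j0 0 = 0.
Proof. by rewrite /ev rmorph0. Qed.
Lemma evC j0 c : ev j0 c%:MP = c%:MP.
Proof. by rewrite /ev mmapC. Qed.
Lemma evX j0 j : ev j0 'X_j = evh j0 j.
Proof. by rewrite /ev mmapX mmap1U. Qed.
Lemma ev_sum j0 n (F : 'I_n -> P) : ev j0 (\sum_(i < n) F i) = \sum_(i < n) ev j0 (F i).
Proof. by rewrite /ev rmorph_sum. Qed.

Definition Dec j0 (x : P) := exists r, x = 'X_j0 * r + ev j0 x.

Lemma DecD j0 x y : Dec j0 x -> Dec j0 y -> Dec j0 (x + y).
Proof. move=> [r1 h1] [r2 h2]; exists (r1 + r2); rewrite evD; move: h1 h2; move: (ev j0 x) (ev j0 y) => ex ey -> ->; ring. Qed.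
Lemma DecM j0 x y : Dec j0 x -> Dec j0 y -> Dec j0 (x * y).
Proof.
move=> [r1 h1] [r2 h2]; exists (r1 * y + ev j0 x * r2).
rewrite evM; move: h1 h2; move: (ev j0 x) (ev j0 y) => ex ey -> ->; ring.
Qed.
Lemma DecC j0 c : Dec j0 c%:MP.
Proof. by exists 0; rewrite evC mulr0 add0r. Qed.
Lemma DecX j0 j : Dec j0 'X_j.
Proof.
rewrite /Dec evX /evh; case: eqP => [->|_].
  by exists 1; rewrite mulr1 addr0.
by exists 0; rewrite mulr0 add0r.
Qed.

Lemma dec j0 x : Dec j0 x.
Proof.
elim/mpolyind: x => [|c mm x _ _ IH].
  by exists 0; rewrite ev0 mulr0 addr0.
apply: DecD => //; rewrite -mul_mpolyC; apply: DecM; first exact: DecC.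
rewrite mpolyXE_id; apply: (big_ind (Dec j0)).
- by rewrite -mpolyC1; apply: DecC.
- exact: DecM.
move=> i _; elim: (mm i) => [|e IHe]; first by rewrite expr0 -mpolyC1; apply: DecC.
by rewrite exprS; apply: DecM => //; apply: DecX.
Qed.

Lemma X_neq0 (j : 'I_m) : ('X_j : P) != 0.
Proof.
apply/eqP => h; have := @mcoeffXU m k j j; rewrite h mcoeff0 eqxx => /eqP.
by rewrite eq_sym oner_eq0.
Qed.


Variable Jp : P -> Prop.
Hypothesis J0 : Jp 0.
Hypothesis JD : forall x y, Jp x -> Jp y -> Jp (x + y).
Hypothesis JM : forall c x, Jp x -> Jp (c * x).

Lemma kos n (a : nat -> 'I_m) (Z : 'I_m -> P) (u : nat -> P) :
  (forall i l, (i < n)%N -> (l < n)%N -> Jp ('X_(a l) * Z (a i) - 'X_(a i) * Z (a l))) ->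
  \sum_(i < n) u i * 'X_(a i) = 0 -> Jp (\sum_(i < n) u i * Z (a i)).
Proof.
elim: n u => [|n IH] u pair rel; first by rewrite big_ord0.
set j0 := a n; set y : P := 'X_j0.
have decb i : exists r, u i == y * r + ev j0 (u i).
  by have [r hr] := dec j0 (u i); exists r; apply/eqP.
pose q i := xchoose (decb i).
have hq i : u i = y * q i + ev j0 (u i) by apply/eqP; exact: (xchooseP (decb i)).
pose u' i := if a i == j0 then 0 else ev j0 (u i).
have rel' : \sum_(i < n) u' i * 'X_(a i) = 0.
  have := congr1 (ev j0) rel; rewrite ev_sum big_ord_recr /= evM evX /evh eqxx mulr0 addr0 ev0.
  move=> h; apply: (etrans _ h); apply: eq_bigr => i _; rewrite evM evX /evh /u'.
  by case: eqP => _; rewrite ?mulr0 ?mul0r.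
have IH' := IH u' (fun i l hi hl => pair i l (ltnW hi) (ltnW hl)) rel'.
pose W := \sum_(i < n) (q i * 'X_(a i) + (if a i == j0 then ev j0 (u i) else 0)).
have split1 : \sum_(i < n) u i * 'X_(a i) = \sum_(i < n) u' i * 'X_(a i) + y * W.
  rewrite /W mulr_sumr -big_split; apply: eq_bigr => i _ /=.
  rewrite /u'; case: eqP => [e|_].
    by rewrite e {1}hq -/y; ring.
  by rewrite {1}hq; ring.
have hW : W + u n = 0.
  move: rel; rewrite big_ord_recr /= split1 rel' add0r -/y.
  rewrite [u n * y]mulrC -mulrDr => /eqP.
  by rewrite mulf_eq0 (negbTE (X_neq0 _)) /= => /eqP.
have hun : u n = - W by rewrite -(addKr W (u n)) hW addr0.
have -> : \sum_(i < n.+1) u i * Z (a i) =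
   \sum_(i < n) (u' i * Z (a i) + q i * ('X_(a n) * Z (a i) - 'X_(a i) * Z (a n))).
  rewrite big_ord_recr /= hun mulNr /W mulr_suml -sumrN -big_split; apply: eq_bigr => i _ /=.
  rewrite /u'; case: eqP => [e|_].
    by rewrite {1}hq e /y /j0; ring.
  by rewrite {1}hq -/y; ring.
rewrite big_split /=; apply: JD => //.
apply: (big_ind Jp) => // i _; apply: JM; apply: pair => //.
by apply: ltnW; apply: ltn_ord.
Qed.

End Koszul.

Lemma det3E (R : comRingType) (A : 'M[R]_3) :
  \det A = A 0 0 * (A 1 1 * A 2%:R 2%:R - A 1 2%:R * A 2%:R 1)
         - A 0 1 * (A 1 0 * A 2%:R 2%:R - A 1 2%:R * A 2%:R 0)
         + A 0 2%:R * (A 1 0 * A 2%:R 1 - A 1 1 * A 2%:R 0).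
Proof.
pose B (i j : nat) := A (inord i) (inord j).
have E : forall i j : 'I_3, A i j = B i j by move=> i j; rewrite /B !inord_val.
rewrite (expand_det_row _ 0) !big_ord_recr big_ord0 /= /cofactor.
rewrite !(expand_det_row _ 0) !big_ord_recr !big_ord0 /= /cofactor.
rewrite !det_mx11 !mxE !E /=.
rewrite !expr0 !expr1 ?exprS ?expr0; ring.
Qed.

Section PartC2.
Variable k : fieldType.
Variable p : nat.
Hypothesis hp : (3 <= p)%N.
Local Notation S := {mpoly k[p.*2]}.
Local Notation e := (evar k p).

Definition cv (c : nat) (r : nat) : S :=
    let i := (c.+1 %/ 2)%N in
    if c == 0%N then
      match r with 0%N => 1 | 1%N => e p | _ => e p.*2 end
    else if odd c then
      match r with 0%N => e i | 1%N => e (p + i) | _ => 0 end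
    else
      match r with 0%N => 0 | 1%N => e i | _ => e (p + i) end.

Lemma MmatE r c : Mmat k p r c = cv c r.
Proof. by rewrite mxE. Qed.

Definition D (u v w : nat -> S) :=
  u 0%N * (v 1%N * w 2%N - w 1%N * v 2%N) - v 0%N * (u 1%N * w 2%N - w 1%N * u 2%N)
  + w 0%N * (u 1%N * v 2%N - v 1%N * u 2%N).

Lemma ig_minor x : minor3 k p x -> minor_ideal k p x.
Proof. exact: igG. Qed.

Lemma minor_sorted c0 c1 c2 : (c0 < c1 < c2)%N -> (c2 < p.*2.-1)%N ->
  minor_ideal k p (D (cv c0) (cv c1) (cv c2)).
Proof.
move=> /andP [h01 h12] h2.
pose d : 'I_(p.*2.-1) := Ordinal h2.
pose f (j : 'I_3) : 'I_(p.*2.-1) := insubd d (nth 0%N [:: c0; c1; c2] j).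
have fv j : val (f j) = nth 0%N [:: c0; c1; c2] j.
  rewrite val_insubd; case: ifP => // /negP; case: j => [[|[|[|]]]] //= _; lia.
apply: ig_minor; exists f; split.
  by rewrite !fv /= !inordK //= h01 h12.
rewrite det3E !mxE /= !fv /D /cv /=. ring.
Qed.


Lemma minor_0 c1 c2 : (0 < c1)%N -> (0 < c2)%N -> c1 <> c2 -> (c1 < p.*2.-1)%N -> (c2 < p.*2.-1)%N ->
  minor_ideal k p (D (cv 0) (cv c1) (cv c2)).
Proof.
move=> h1 h2 ne l1 l2.
have [lt|ge] := ltnP c1 c2; first by apply: minor_sorted => //; rewrite h1 lt.
have lt : (c2 < c1)%N by lia.
have -> : D (cv 0) (cv c1) (cv c2) = - D (cv 0) (cv c2) (cv c1) by rewrite /D; ring.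
by apply: igN; apply: minor_sorted => //; rewrite h2 lt.
Qed.

Lemma cv0 : cv 0 = fun r => match r with 0%N => 1 | 1%N => e p | _ => e p.*2 end.
Proof. by []. Qed.
Lemma cv_odd i : (0 < i)%N -> cv (i.*2.-1) = fun r => match r with 0%N => e i | 1%N => e (p + i) | _ => 0 end.
Proof.
move=> hi; rewrite /cv; have -> : (i.*2.-1 == 0)%N = false by lia.
have -> : odd i.*2.-1 by case: i hi => // i _; rewrite doubleS /= odd_double.
by have -> : ((i.*2.-1).+1 %/ 2 = i)%N by lia.
Qed.
Lemma cv_even i : (0 < i)%N -> cv (i.*2) = fun r => match r with 0%N => 0 | 1%N => e i | _ => e (p + i) end.
Proof.
move=> hi; rewrite /cv; have -> : (i.*2 == 0)%N = false by lia.
rewrite odd_double.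
by have -> : ((i.*2).+1 %/ 2 = i)%N by lia.
Qed.

Definition Zf (j : nat) : S :=
  if (j < p)%N then e (p + j.+1) else e p * e j.+1 - e (j.+1 - p) * e p.*2.

Definition good (j : nat) := (j < p.-1)%N || (p <= j < p.*2.-1)%N.

Lemma good_cases j : good j ->
  exists2 i, (0 < i < p)%N & (j = i.-1 /\ Zf j = e (p + i) /\ e j.+1 = e i /\ (j < p)%N)
     \/ (j = (p + i).-1 /\ Zf j = e p * e (p + i) - e i * e p.*2 /\ e j.+1 = e (p + i) /\ ~~ (j < p)%N).
Proof.
rewrite /good /Zf => /orP [h|h].
  exists j.+1; first lia.
  left; have -> : (j < p)%N by lia.
  split; first lia.
  done.
exists (j.+1 - p)%N; first lia.
right; have -> : (j < p)%N = false by lia.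
have -> : (p + (j.+1 - p))%N = j.+1 by lia.
split; first lia.
done.
Qed.

Lemma pair_ok j1 j2 : good j1 -> good j2 ->
  minor_ideal k p (e j2.+1 * Zf j1 - e j1.+1 * Zf j2).
Proof.
move=> /good_cases [i1 hi1 H1] /good_cases [i2 hi2 H2].
case: H1 => [[_ [-> [-> _]]]|[_ [-> [-> _]]]];
case: H2 => [[_ [-> [-> _]]]|[_ [-> [-> _]]]].
- have [eq|ne] := eqVneq i1 i2.
    by rewrite eq subrr; apply: ig0.
  have := minor_0 (i2.*2) (i1.*2); rewrite cv0 !cv_even /D; try lia.
  move=> h; have : minor_ideal k p (1 * (e i2 * e (p + i1) - e i1 * e (p + i2)) - 0 * (e p * e (p + i1) - e i1 * e p.*2) + 0 * (e p * e (p + i2) - e i2 * e p.*2)).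
    by apply: h; try lia; move=> /eqP; rewrite eqn_double; apply/negP.
  by congr (minor_ideal _ _ _); ring.
- have := minor_0 (i1.*2.-1) (i2.*2); rewrite cv0 cv_odd ?cv_even /D; try lia.
  move=> h; have := h ltac:(lia) ltac:(lia) ltac:(lia) ltac:(lia) ltac:(lia).
  by congr (minor_ideal _ _ _); ring.
- have := minor_0 (i2.*2.-1) (i1.*2); rewrite cv0 cv_odd ?cv_even /D; try lia.
  move=> h; have := igN _ _ _ (h ltac:(lia) ltac:(lia) ltac:(lia) ltac:(lia) ltac:(lia)).
  by congr (minor_ideal _ _ _); ring.
- have [eq|ne] := eqVneq i1 i2.
    by rewrite eq subrr; apply: ig0.
  have := minor_0 (i2.*2) (i1.*2); rewrite cv0 !cv_even /D; try lia.
  move=> h; have : minor_ideal k p (1 * (e i2 * e (p + i1) - e i1 * e (p + i2)) - 0 * (e p * e (p + i1) - e i1 * e p.*2) + 0 * (e p * e (p + i2) - e i2 * e p.*2)).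
    by apply: h; try lia; move=> /eqP; rewrite eqn_double; apply/negP.
  move=> /(igM _ _ (e p.*2)).
  by congr (minor_ideal _ _ _); ring.
Qed.

End PartC2.

Section PolyFacts.
Variable R : comNzRingType.

Lemma quad_size (a b c : R) : leq (size (a%:P + b%:P * 'X + c%:P * 'X^2)) 3.
Proof.
apply: (leq_trans (size_polyD _ _)); rewrite geq_max; apply/andP; split.
  rewrite [a%:P + _]addrC size_MXaddC; case: ifP => // _.
  by rewrite ltnS (leq_trans (size_polyC_leq1 _)).
have [->|nz] := eqVneq c 0; first by rewrite mul0r size_poly0.
by rewrite size_mulXn ?polyC_eq0 // size_polyC nz.
Qed.

Lemma quad_coef (a b c : R) j :
  (a%:P + b%:P * 'X + c%:P * 'X^2)`_j = nth 0 [:: a; b; c] j.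
Proof.
rewrite !coefD coefMX coefMXn !coefC.
by case: j => [|[|[|j]]] //=; rewrite ?addr0 ?add0r ?nth_nil ?addr0.
Qed.

Lemma lin_decomp (r : {poly R}) : leq (size r) 2 -> r = (r`_0)%:P + (r`_1)%:P * 'X.
Proof.
move=> hs; apply/polyP => j; rewrite coefD coefMX !coefC.
case: j => [|[|j]] /=; rewrite ?addr0 ?add0r //.
by rewrite nth_default // (leq_trans hs).
Qed.

End PolyFacts.

Definition natf {T : Type} {n : nat} (d : T) (f : 'I_n -> T) (i : nat) : T :=
  if insub i is Some o then f o else d.
Lemma natfE T n d (f : 'I_n -> T) (o : 'I_n) : natf d f o = f o.
Proof. by rewrite /natf valK. Qed.

Section PartC1.
Variable k : fieldType.
Variable p : nat.
Hypothesis hp : (3 <= p)%N.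
Local Notation S := {mpoly k[p.*2]}.
Local Notation e := (evar k p).

Lemma f0_low : leq (size ((e p)%:P * 'X + (e p.*2)%:P : {poly S})).+1 (size ('X^2 : {poly S})).
Proof.
rewrite size_polyXn size_MXaddC.
by case: ifP => // _; rewrite !ltnS (leq_trans (size_polyC_leq1 _)).
Qed.

Lemma f0_size : size (f0 k p) = 3%N.
Proof. by rewrite /f0 -addrA size_polyDl ?f0_low // size_polyXn. Qed.

Lemma f0_monic : f0 k p \is monic.
Proof. by rewrite monicE /f0 -addrA lead_coefDl ?lead_coefXn // f0_low. Qed.

Lemma f0_neq0 : f0 k p != 0.
Proof. by rewrite -size_poly_eq0 f0_size. Qed.

Lemma elim_to_minor x : elim_ideal k p x -> minor_ideal k p x.
Proof.
move=> [n [g0 [c0 [Gg hx0]]]].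
pose gN := natf 0 g0; pose cN := natf 0 c0.
have hx : x%:P = \sum_(i < n) cN i * gN i.
  by rewrite hx0; apply: eq_bigr => i _; rewrite /gN /cN !natfE.
have GgN : forall i, (i < n)%N -> fgens k p (gN i).
  by move=> i hi; rewrite /gN -[i]/(val (Ordinal hi)) natfE.
clearbody gN cN.
pose Pr i := fun j => ((0 < j < p)%N && [|| (n <= i)%N, gN i == f0 k p | gN i == fi k p j]).
have ex i : exists j, Pr i j.
  rewrite /Pr.
  have [hi|hi] := leqP n i.
    exists 1%N; apply/andP; split; first lia.
    by apply/orP; left.
  case: (GgN i hi) => [->|[j [hj ->]]].
    by exists 1%N; apply/andP; split; [lia | apply/orP; right; apply/orP; left; exact: eqxx].
  by exists j; apply/andP; split; [lia | apply/orP; right; apply/orP; right; exact: eqxx].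
pose idx i := xchoose (ex i).
have hidx i : (0 < idx i < p)%N by have /andP [] := xchooseP (ex i).
have hg i : (i < n)%N -> gN i = f0 k p \/ gN i = fi k p (idx i).
  move=> hi; have /andP [_] := xchooseP (ex i).
  by rewrite leqNgt hi /= => /orP [/eqP ->|/eqP ->]; [left|right].
pose isf i := gN i == f0 k p.
pose r i := Pdiv.Ring.rmodp (cN i) (f0 k p).
have hr i : leq (size (r i)) 2.
  by have := Pdiv.Ring.ltn_rmodpN0 (cN i) f0_neq0; rewrite f0_size.
pose al i := if isf i then 0 else (r i)`_0.
pose be i := if isf i then 0 else (r i)`_1.
pose E i := e (idx i).
pose E' i := e (p + idx i).
pose Q := \sum_(i < n) (if isf i then cN i else Pdiv.Ring.rdivp (cN i) (f0 k p) * gN i).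
pose A := \sum_(i < n) al i * E' i.
pose B := \sum_(i < n) (al i * E i + be i * E' i).
pose C := \sum_(i < n) be i * E i.
have term i : (i < n)%N -> cN i * gN i =
   (if isf i then cN i else Pdiv.Ring.rdivp (cN i) (f0 k p) * gN i) * f0 k p +
   ((al i * E' i)%:P + (al i * E i + be i * E' i)%:P * 'X + (be i * E i)%:P * 'X^2).
  move=> hi; rewrite /al /be; case: (boolP (isf i)) => hf.
    by rewrite (eqP hf) !(mul0r, add0r, polyC0, addr0).
  have [hgf|hgi] := hg i hi; first by rewrite /isf hgf (eqxx (f0 k p)) in hf.
  rewrite hgi {1}(Pdiv.RingMonic.rdivp_eq f0_monic (cN i)) -/(r i) {1}(@lin_decomp _ _ (hr i)).
  rewrite /fi /E /E' !polyCD !polyCM. ring.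
have hsum : x%:P = Q * f0 k p + (A%:P + B%:P * 'X + C%:P * 'X^2).
  rewrite hx (eq_bigr _ (fun (i : 'I_n) _ => term i (ltn_ord i))).
  rewrite big_split /= -mulr_suml; congr (_ + _).
  rewrite /A /B /C !rmorph_sum !mulr_suml -!big_split /=.
  by apply: eq_bigr => i _.
clearbody Q.
have hQ : Q = (Q`_0)%:P.
  have hsz : leq (size (Q * f0 k p)) 3.
    have -> : Q * f0 k p = x%:P - (A%:P + B%:P * 'X + C%:P * 'X^2) by rewrite hsum addrK.
    apply: (leq_trans (size_polyD _ _)); rewrite geq_max size_polyN quad_size andbT.
    by rewrite (leq_trans (size_polyC_leq1 _)).
  apply: size1_polyC; have [->|nz] := eqVneq Q 0; first by rewrite size_poly0.
  by move: hsz; rewrite size_Mmonic // ?f0_monic // f0_size; lia.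
have hq : x%:P = ((Q`_0 * e p.*2 + A)%:P + (Q`_0 * e p + B)%:P * 'X + (Q`_0 + C)%:P * 'X^2).
  by rewrite {1}hsum {1}hQ /f0 !polyCD !polyCM; ring.
have k0 := congr1 (fun P : {poly S} => P`_0) hq.
have k1 := congr1 (fun P : {poly S} => P`_1) hq.
have k2 := congr1 (fun P : {poly S} => P`_2) hq.
rewrite /= !quad_coef !coefC /= in k0 k1 k2.
have hB : B = - (Q`_0 * e p) by apply/eqP; rewrite -addr_eq0 addrC -k1.
have hC : C = - Q`_0 by apply/eqP; rewrite -addr_eq0 addrC -k2.
have hp2 : (0 < p.*2)%N by lia.
pose vI (j : nat) : 'I_(p.*2) := insubd (Ordinal hp2) j.
have hvI j : (j < p.*2)%N -> val (vI j) = j by move=> h; rewrite val_insubd h.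
have hX j : (j < p.*2)%N -> 'X_(vI j) = e j.+1.
  by move=> h; rewrite /evar /vI /insubd /= (@insubT _ (fun m => m < p.*2)%N 'I_(p.*2) j h).
have Zlo j : (j < p)%N -> Zf k p j = e (p + j.+1) by move=> h; rewrite /Zf h.
have Zhi j : (p <= j)%N -> Zf k p j = e p * e j.+1 - e (j.+1 - p) * e p.*2.
  by move=> h; rewrite /Zf ltnNge h.
pose jj i := if (i < n)%N then (idx i).-1 else (p + idx (i - n)%N)%N.-1.
pose a i := vI (jj i).
pose u i := if (i < n)%N then al i - e p * be i else be (i - n)%N.
pose Z (o : 'I_(p.*2)) := Zf k p o.
have gd j : good p (jj j) /\ (jj j < p.*2)%N.
  rewrite /jj /good; have := hidx j; have := hidx (j - n)%N; case: ifP => _; lia.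
have := @kos k p.*2 (minor_ideal k p) (ig0 _ _) (@igD _ _) (fun c y => @igM _ _ c y) (n + n) a Z u.
have -> : \sum_(i < n + n) u i * Z (a i) = x.
  rewrite big_split_ord /=.
  have hz1 (i : 'I_n) : u i * Z (a i) = (al i - e p * be i) * E' i.
    have h := hidx i; rewrite /u /Z /a /jj ltn_ord hvI; last lia.
    rewrite Zlo; last lia.
    by have -> : ((idx i).-1.+1 = idx i)%N by lia.
  have hz2 (i : 'I_n) : u (n + i)%N * Z (a (n + i)%N) = be i * (e p * E' i - E i * e p.*2).
    have h := hidx i; rewrite /u /Z /a /jj ltnNge leq_addr /= addKn hvI; last lia.
    rewrite Zhi; last lia.
    have -> : ((p + idx i).-1.+1 = p + idx i)%N by lia.
    have -> : (p + idx i - p = idx i)%N by lia.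
    by rewrite /E /E'; ring.
  transitivity (\sum_(i < n) (al i - e p * be i) * E' i + \sum_(i < n) be i * (e p * E' i - E i * e p.*2)).
    by congr (_ + _); apply: eq_bigr => i _; [exact: (hz1 i) | exact: (hz2 i)].
  have -> : \sum_(i < n) (al i - e p * be i) * E' i + \sum_(i < n) be i * (e p * E' i - E i * e p.*2)
            = A - e p.*2 * C.
    by rewrite /A /C mulr_sumr -sumrB -big_split; apply: eq_bigr => i _ /=; ring.
  by rewrite k0 hC; ring.
apply.
  move=> i l hi hl; rewrite /Z /a.
  have [g1 l1] := gd i; have [g2 l2] := gd l.
  by rewrite !hX // !hvI //; apply: pair_ok.
rewrite big_split_ord /=.
have hu1 (i : 'I_n) : u i * 'X_(a i) = (al i - e p * be i) * E i.
  have h := hidx i; rewrite /u /a /jj ltn_ord hX; last lia.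
  by have -> : ((idx i).-1.+1 = idx i)%N by lia.
have hu2 (i : 'I_n) : u (n + i)%N * 'X_(a (n + i)%N) = be i * E' i.
  have h := hidx i; rewrite /u /a /jj ltnNge leq_addr /= addKn hX; last lia.
  by have -> : ((p + idx i).-1.+1 = p + idx i)%N by lia.
transitivity (\sum_(i < n) (al i - e p * be i) * E i + \sum_(i < n) be i * E' i).
  by congr (_ + _); apply: eq_bigr => i _; [exact: (hu1 i) | exact: (hu2 i)].
have -> : \sum_(i < n) (al i - e p * be i) * E i + \sum_(i < n) be i * E' i = B - e p * C.
  by rewrite /B /C mulr_sumr -sumrB -big_split; apply: eq_bigr => i _ /=; ring.
by rewrite hB hC; ring.
Qed.
End PartC1.

Theorem corollary6p9 (k : fieldType) (p : nat) (hp : (3 <= p)%N) :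
  forall x : {mpoly k[p.*2]}, elim_ideal k p x <-> minor_ideal k p x.
Proof.
move=> x; split; [exact: elim_to_minor | exact: minor_to_elim].
Qed.
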